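(* Let $\lambda>0$, let $K\ge1$ be an integer, and let $1+\frac{1}{1+2K}\le\bar E^{max}\le2$. Set $\pi_0^*=\bar E^{max}-1$ and $k^*=\lfloor(\frac{1}{\pi_0^*}-1)/2\rfloor$. Assume $k^*+1\le K$ and $\rho^*_{k^*+1}:=\frac{1}{\pi_0^*}-1-2k^*>0$. Define the rates $$\lambda_k^*=\begin{cases}2\lambda & k=0,\\ \lambda & 1\le k\le k^*,\\ 0 & k^*+1\le k\le K,\end{cases}\qquad \mu_k^*=\begin{cases}\lambda & k\ne k^*+1,\\ \dfrac{2\lambda}{\rho^*_{k^*+1}} & k=k^*+1.\end{cases}$$ Equivalently, define the ENC parameters $$g_k^*=\begin{cases}0 & k\le k^*,\\ 1 & k^*+1\le k\le K,\end{cases}\qquad f_k^*=\begin{cases}\dfrac{2\lambda}{\rho^*_{k^*+1}}-\lambda & k=k^*+1,\\ 0 & k\ne k^*+1.\end{cases}$$ Then these rates are feasible for Problem 1 (in particular $\mu_k^*\ge\lambda$ and $\lambda_K^*=0$), the resulting stationary distribution satisfies $\pi_0=\pi_0^*$, and the average delay $$D=\frac{1}{2\lambda}\sum_k k\pi_k$$ equals the optimal value $$\frac{k^*+1}{2\lambda}\bigl[1-(\bar E^{max}-1)(k^*+1)\bigr].$$ Hence these parameters are optimal for Problem 1.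
   Context: ENC parameters are $g_0,\dots,g_K\in[0,1]$ and $f_1,\dots,f_K\ge0$. They determine the rates $$\lambda_0=2\lambda(1-g_0),\qquad \lambda_k=\lambda(1-g_k)\ (1\le k\le K),\qquad \mu_k=\lambda+f_k\ (1\le k\le K).$$ The buffer is the birth–death chain on $\{0,\dots,K\}$ with birth rates $\lambda_k$ and death rates $\mu_k$. Its stationary distribution is $$\pi_k=\pi_0\prod_{m=0}^{k-1}\frac{\lambda_m}{\mu_{m+1}},\qquad \pi_0=\Bigl[1+\sum_{k=1}^{K}\prod_{m=0}^{k-1}\frac{\lambda_m}{\mu_{m+1}}\Bigr]^{-1}.$$ Problem 1 is the following: minimize $D=\frac{1}{2\lambda}\sum_{k=0}^K k\pi_k$ over rates satisfying $0\le\lambda_0\le2\lambda$, $0\le\lambda_k\le\lambda$ for $1\le k\le K-1$, $\lambda_K=0$, and $\mu_k\ge\lambda$, subject to $\pi_0+1\le\bar E^{max}$. *)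

(* Defs.v *)
From Stdlib Require Import Reals Lra Lia ZArith.
Open Scope R_scope.

Definition enc_lam (lambda : R) (g : nat -> R) (k : nat) : R :=
  match k with
  | O => 2 * lambda * (1 - g O)
  | _ => lambda * (1 - g k)
  end.
Definition enc_mu (lambda : R) (f : nat -> R) (k : nat) : R := lambda + f k.

Fixpoint prodr (lam mu : nat -> R) (k : nat) : R :=
  match k with
  | O => 1
  | S m => prodr lam mu m * (lam m / mu (S m))
  end.

(* pi_0 = [1 + sum_{k=1}^K prod ...]^{-1}, written as sum from k=0 (prodr 0 = 1) *)
Definition pi0 (K : nat) (lam mu : nat -> R) : R :=
  / sum_f_R0 (prodr lam mu) K.

Definition pik (K : nat) (lam mu : nat -> R) (k : nat) : R :=
  pi0 K lam mu * prodr lam mu k.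

Definition delay (lambda : R) (K : nat) (lam mu : nat -> R) : R :=
  / (2 * lambda) * sum_f_R0 (fun k => INR k * pik K lam mu k) K.

Definition feasible (lambda Emax : R) (K : nat) (lam mu : nat -> R) : Prop :=
  0 <= lam O <= 2 * lambda /\
  (forall k, (1 <= k <= K - 1)%nat -> 0 <= lam k <= lambda) /\
  lam K = 0 /\
  (forall k, (1 <= k <= K)%nat -> lambda <= mu k) /\
  pi0 K lam mu + 1 <= Emax.

(* Main.v *)
Require Import Defs.
From Stdlib Require Import Reals ZArith Lra Lia.
Open Scope R_scope.

Lemma sum_lin (f p : nat -> R) c m :
  sum_f_R0 (fun k => (f k - c) * p k) m =
  sum_f_R0 (fun k => f k * p k) m - c * sum_f_R0 p m.
Proof. induction m; simpl; [ring|rewrite IHm; ring]. Qed.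

Lemma sum_scal (f p : nat -> R) a m :
  sum_f_R0 (fun k => f k * (a * p k)) m = a * sum_f_R0 (fun k => f k * p k) m.
Proof. induction m; simpl; [ring|rewrite IHm; ring]. Qed.

Section Low.
Variables (K n : nat) (p : nat -> R).
Hypothesis Hp0 : p 0%nat = 1.
Hypothesis Hp : forall k, (1 <= k <= K)%nat -> 0 <= p k <= 2.

Lemma L1 m : (m <= n)%nat -> (m <= K)%nat ->
  sum_f_R0 (fun k => (INR k - INR n) * p k) m >=
  - INR n + INR m * (INR m + 1) - 2 * INR n * INR m.
Proof.
  induction m; intros H1 H2.
  - simpl. rewrite Hp0. lra.
  - rewrite tech5. specialize (IHm ltac:(lia) ltac:(lia)).
    destruct (Hp (S m) ltac:(lia)) as [A B].
    assert (INR (S m) <= INR n) by (apply le_INR; lia).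
    assert ((INR (S m) - INR n) * p (S m) >= 2 * (INR (S m) - INR n)) by nra.
    rewrite S_INR in *. nra.
Qed.

Lemma L2 m : (n <= m)%nat -> (m <= K)%nat ->
  sum_f_R0 (fun k => (INR k - INR n) * p k) m >= - INR n ^ 2.
Proof.
  induction m; intros H1 H2.
  - assert (n = 0%nat) by lia. subst. simpl. rewrite Hp0. lra.
  - destruct (Nat.eq_dec n (S m)) as [E|E].
    + pose proof (L1 (S m) ltac:(lia) H2) as X. assert (INR (S m) = INR n) by (rewrite E; auto). rewrite H in X. nra.
    + rewrite tech5. specialize (IHm ltac:(lia) ltac:(lia)).
      destruct (Hp (S m) ltac:(lia)) as [A B].
      assert (INR n <= INR (S m)) by (apply le_INR; lia). nra.
Qed.

Lemma Sge1 m : (m <= K)%nat -> sum_f_R0 p m >= 1.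
Proof.
  induction m; intros H.
  - simpl. lra.
  - simpl. specialize (IHm ltac:(lia)). destruct (Hp (S m) ltac:(lia)). lra.
Qed.
End Low.

Lemma pbounds lambda Emax K lam mu : 0 < lambda -> feasible lambda Emax K lam mu ->
  forall k, (1 <= k <= K)%nat -> 0 <= prodr lam mu k <= 2.
Proof.
  intros Hl [F0 [F1 [F2 [F3 F4]]]].
  induction k; intros Hk; [lia|].
  destruct k as [|k].
  - simpl. specialize (F3 1%nat ltac:(lia)).
    assert (E: lam 0%nat / mu 1%nat * mu 1%nat = lam 0%nat) by (field; lra).
    set (r := lam 0%nat / mu 1%nat) in *.
    assert (0 <= r).
    { destruct (Rle_lt_dec 0 r); auto. nra. }
    assert (r <= 2).
    { destruct (Rle_lt_dec r 2); auto. nra. }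
    lra.
  - specialize (IHk ltac:(lia)).
    specialize (F3 (S (S k)) ltac:(lia)). specialize (F1 (S k) ltac:(lia)).
    assert (E: lam (S k) / mu (S (S k)) * mu (S (S k)) = lam (S k)) by (field; lra).
    set (r := lam (S k) / mu (S (S k))) in *.
    assert (0 <= r).
    { destruct (Rle_lt_dec 0 r); auto. nra. }
    assert (r <= 1).
    { destruct (Rle_lt_dec r 1); auto. nra. }
    change (prodr lam mu (S (S k))) with (prodr lam mu (S k) * r). split; nra.
Qed.

Lemma lower lambda Emax K lam mu n : 0 < lambda -> feasible lambda Emax K lam mu ->
  (n <= K)%nat ->
  (INR n - (Emax - 1) * INR n ^ 2) / (2 * lambda) <= delay lambda K lam mu.
Proof.
  intros Hl Hf Hn.
  pose proof (pbounds _ _ _ _ _ Hl Hf) as Hp.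
  assert (Hp0 : prodr lam mu 0 = 1) by reflexivity.
  pose proof (L2 K n _ Hp0 Hp K Hn (le_n _)) as X.
  pose proof (Sge1 K _ Hp0 Hp K (le_n _)) as S1.
  rewrite sum_lin in X.
  destruct Hf as [_ [_ [_ [_ F4]]]].
  unfold delay, pik. rewrite sum_scal.
  unfold pi0 in *.
  set (S := sum_f_R0 (prodr lam mu) K) in *.
  set (W := sum_f_R0 (fun k => INR k * prodr lam mu k) K) in *.
  assert (Hi : / S * S = 1) by (field; lra).
  assert (0 < / S) by (apply Rinv_0_lt_compat; lra).
  set (q := / S) in *.
  assert (INR n - (Emax - 1) * INR n ^ 2 <= q * W).
  { assert (0 <= INR n) by apply pos_INR. nra. }
  unfold Rdiv. rewrite (Rmult_comm _ (/ (2*lambda))).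
  apply Rmult_le_compat_l. left; apply Rinv_0_lt_compat; lra. lra.
Qed.

Section Chain.
Variables (lambda rho : R) (ks : nat).
Hypothesis Hl : 0 < lambda.
Hypothesis Hr : 0 < rho.
Definition lamC (k : nat) : R :=
  if (k =? 0)%nat then 2 * lambda else if (k <=? ks)%nat then lambda else 0.
Definition muC (k : nat) : R := if (k =? ks + 1)%nat then 2 * lambda / rho else lambda.
Definition PC (k : nat) : R :=
  if (k =? 0)%nat then 1 else if (k <=? ks)%nat then 2 else if (k =? ks + 1)%nat then rho else 0.

Ltac cases := repeat match goal with
  | |- context [(?a =? ?b)%nat] => destruct (Nat.eqb_spec a b)
  | |- context [(?a <=? ?b)%nat] => destruct (Nat.leb_spec a b) end.

Lemma prodC k : prodr lamC muC k = PC k.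
Proof.
  induction k.
  - reflexivity.
  - change (prodr lamC muC (S k)) with (prodr lamC muC k * (lamC k / muC (S k))).
    rewrite IHk. unfold lamC, muC, PC. cases; try lia; try (field; lra).
Qed.

Lemma sumC m : sum_f_R0 PC m =
  if (m <=? ks)%nat then 1 + 2 * INR m else 1 + 2 * INR ks + rho.
Proof.
  induction m.
  - simpl. unfold PC. cases; try lia; simpl; lra.
  - rewrite tech5, IHm. rewrite S_INR. unfold PC. cases; try lia; try lra.
    assert (m = ks) by lia. subst. lra.
Qed.

Lemma wsumC m : sum_f_R0 (fun k => INR k * PC k) m =
  if (m <=? ks)%nat then INR m * (INR m + 1)
  else INR ks * (INR ks + 1) + (INR ks + 1) * rho.
Proof.
  induction m.
  - simpl. unfold PC. cases; try lia; simpl; lra.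
  - rewrite tech5, IHm. rewrite S_INR. unfold PC. cases; try lia; try lra.
    assert (m = ks) by lia. subst. lra.
Qed.
End Chain.

Theorem mainTheorem5 (lambda Emax : R) (K : nat) :
  0 < lambda -> (1 <= K)%nat ->
  1 + 1 / (1 + 2 * INR K) <= Emax -> Emax <= 2 ->
  let pi0s := Emax - 1 in
  let ks : nat := Z.to_nat (Int_part ((1 / pi0s - 1) / 2)) in
  let rho := 1 / pi0s - 1 - 2 * INR ks in
  (ks + 1 <= K)%nat -> 0 < rho ->
  let lamS : nat -> R := fun k =>
    if (k =? 0)%nat then 2 * lambda
    else if (k <=? ks)%nat then lambda else 0 in
  let muS : nat -> R := fun k =>
    if (k =? ks + 1)%nat then 2 * lambda / rho else lambda in
  let gS : nat -> R := fun k => if (k <=? ks)%nat then 0 else 1 in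
  let fS : nat -> R := fun k =>
    if (k =? ks + 1)%nat then 2 * lambda / rho - lambda else 0 in
  (forall k, (k <= K)%nat ->
     enc_lam lambda gS k = lamS k /\ ((1 <= k)%nat -> enc_mu lambda fS k = muS k)) /\
  (forall k, (k <= K)%nat -> 0 <= gS k <= 1) /\
  (forall k, (1 <= k <= K)%nat -> 0 <= fS k) /\
  feasible lambda Emax K lamS muS /\
  pi0 K lamS muS = pi0s /\
  delay lambda K lamS muS =
    (INR ks + 1) / (2 * lambda) * (1 - (Emax - 1) * (INR ks + 1)) /\
  (forall lam mu : nat -> R, feasible lambda Emax K lam mu ->
     delay lambda K lamS muS <= delay lambda K lam mu).
Proof.
  intros Hl HK HE1 HE2 pi0s ks rho Hks Hrho lamS muS gS fS.
  assert (HK0 : 0 <= INR K) by apply pos_INR.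
  assert (Hpos : 0 < pi0s).
  { unfold pi0s. assert (0 < 1 / (1 + 2 * INR K)).
    { apply Rdiv_lt_0_compat; lra. } lra. }
  assert (Hp1 : pi0s <= 1) by (unfold pi0s; lra).
  set (x := (1 / pi0s - 1) / 2) in *.
  assert (Hy : 1 / pi0s * pi0s = 1) by (field; lra).
  assert (Hx0 : 0 <= x).
  { unfold x. set (y := 1 / pi0s) in *. assert (1 <= y) by nra. lra. }
  assert (Hks1 : INR ks <= x /\ x < INR ks + 1).
  { destruct (base_Int_part x) as [B1 B2].
    assert (Hz : (0 <= Int_part x)%Z).
    { assert (-1 < IZR (Int_part x)) by lra.
      assert (-1 < Int_part x)%Z by (apply lt_IZR; exact H). lia. }
    unfold ks. rewrite INR_IZR_INZ, Z2Nat.id by exact Hz. lra. }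
  assert (Hrho2 : rho < 2) by (unfold rho, x in *; lra).
  assert (Hmu : lambda <= 2 * lambda / rho).
  { apply (Rmult_le_reg_r rho); [lra|]. unfold Rdiv.
    rewrite Rmult_assoc, Rinv_l by lra. nra. }
  assert (HP : forall k, prodr lamS muS k = PC rho ks k) by (intro k; apply (prodC lambda rho ks); lra).
  assert (Hpi0 : pi0 K lamS muS = pi0s).
  { unfold pi0. rewrite (sum_eq _ (PC rho ks) K) by (intros; apply HP).
    rewrite sumC. destruct (Nat.leb_spec K ks); [lia|].
    unfold rho. field_simplify; [field|]; lra. }
  assert (Hfeas : feasible lambda Emax K lamS muS).
  { unfold feasible. split; [|split; [|split; [|split]]].
    - unfold lamS. simpl. lra.
    - intros k Hk. unfold lamS.
      destruct (Nat.eqb_spec k 0); [lia|]. destruct (Nat.leb_spec k ks); lra.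
    - unfold lamS. destruct (Nat.eqb_spec K 0); [lia|].
      destruct (Nat.leb_spec K ks); [lia|]. reflexivity.
    - intros k Hk. unfold muS. destruct (Nat.eqb_spec k (ks+1)); lra.
    - rewrite Hpi0. unfold pi0s. lra. }
  assert (Hdel : delay lambda K lamS muS =
    (INR ks + 1) / (2 * lambda) * (1 - (Emax - 1) * (INR ks + 1))).
  { unfold delay, pik. rewrite sum_scal, Hpi0.
    rewrite (sum_eq _ (fun k => INR k * PC rho ks k) K) by (intros; rewrite HP; reflexivity).
    rewrite wsumC. destruct (Nat.leb_spec K ks); [lia|].
    fold pi0s. unfold rho.
    replace (1 / pi0s) with (/ pi0s) in * by (unfold Rdiv; ring).
    field. lra. }
  split; [|split; [|split; [|split; [|split; [|split]]]]].
  - intros k Hk. split.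
    + unfold enc_lam, lamS, gS. destruct k as [|k].
      * simpl. destruct (Nat.leb_spec 0 ks); [ring|lia].
      * cbn [Nat.eqb]. destruct (Nat.leb_spec (S k) ks); ring.
    + intros _. unfold enc_mu, fS, muS. destruct (Nat.eqb_spec k (ks+1)); ring.
  - intros k _. unfold gS. destruct (Nat.leb_spec k ks); lra.
  - intros k _. unfold fS. destruct (Nat.eqb_spec k (ks+1)); lra.
  - exact Hfeas.
  - exact Hpi0.
  - exact Hdel.
  - intros lam mu Hf. rewrite Hdel.
    pose proof (lower lambda Emax K lam mu (ks+1) Hl Hf Hks) as L.
    rewrite plus_INR in L. simpl INR in L.
    replace ((INR ks + 1) / (2 * lambda) * (1 - (Emax - 1) * (INR ks + 1)))
      with ((INR ks + 1 - (Emax - 1) * (INR ks + 1) ^ 2) / (2 * lambda))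
      by (field; lra).
    exact L.
Qed.
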